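(* Let $Q$ be an admissible orientation of $\tilde A_n$ and $I,J$ indecomposable linearized semigroup ideals of $\Bbbk Q$ of type II such that $\Gamma_I\cup\Gamma_J=\Gamma$. Assume that, for each isolated vertex $\omega$ of $\Gamma_I\cap\Gamma_J$, the edge of $\Gamma_J$ adjacent to $\omega$ is a source of $Q$. Then $IJ$ decomposes into a direct sum of two non-zero ideals.
   Context: $\Bbbk$ is an algebraically closed field. An admissible orientation of $\tilde A_n$ is a finite quiver $Q$ with $n$ vertices whose underlying undirected graph is a cycle, having no oriented cycle and at least one source. Paths include trivial paths $\varepsilon_x$; products are concatenations when defined, $0$ otherwise. Maximal paths are paths not properly contained as subpaths of other paths. A linearized semigroup ideal is an ideal spanned by a set $X$ of paths with $\alpha\omega\beta\in X$ whenever $\omega\in X$ and $\alpha\omega\beta$ is defined. $\Gamma$: vertices the maximal paths, edges the sources and sinks of $Q$, edge $x$ joining the two maximal paths having $x$ as an endpoint. $\Gamma_I$: vertices the maximal paths in $I$, edges the sources/sinks $x$ with $\varepsilon_x\in I$. An indecomposable (non-zero, not a direct sum of two non-zero ideals) linearized semigroup ideal $I$ is of type II if $\Gamma_I$ is a chain (path graph) with at least two vertices which is not all of $\Gamma$. *)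

(* Defs.v *)
From HB Require Import structures.
From mathcomp Require Import all_boot all_algebra.
Set Implicit Arguments. Unset Strict Implicit. Unset Printing Implicit Defensive.
Import GRing.Theory.
Local Open Scope ring_scope.

Record quiver := Quiver {
  qV : finType; qE : finType; qsrc : qE -> qV; qtgt : qE -> qV }.

Section Quiver.
Variable Q : quiver.
Local Notation V := (qV Q).
Local Notation E := (qE Q).
Local Notation src := (@qsrc Q).
Local Notation tgt := (@qtgt Q).

(* A (possibly non-valid) path: starting vertex and list of arrows,
   arrows listed in the order they are traversed. *)
Definition qpath := (V * seq E)%type.

Definition pend (p : qpath) : V := last p.1 (map tgt p.2).

Definition valid (p : qpath) : bool :=
  match p.2 with
  | [::] => true
  | e :: s => (src e == p.1) && path (fun a b => tgt a == src b) e s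
  end.

Definition triv (x : V) : qpath := (x, [::]).

(* p is a subpath of q: q = alpha p beta for some paths alpha, beta *)
Definition subpath (p q : qpath) : Prop :=
  exists i j, (i <= j <= size q.2)%N /\
    p = (pend (q.1, take i q.2), take (j - i) (drop i q.2)).

Definition maximal_path (p : qpath) : Prop :=
  valid p /\ forall q, valid q -> subpath p q -> q = p.

Definition is_source (x : V) : Prop := forall e, tgt e != x.
Definition is_sink (x : V) : Prop := forall e, src e != x.
Definition source_or_sink (x : V) : Prop := is_source x \/ is_sink x.

Definition no_oriented_cycle : Prop :=
  forall p, valid p -> (0 < size p.2)%N -> pend p != p.1.

(* The underlying undirected graph of Q is a cycle with n vertices
   (n = 1: a loop, n = 2: two parallel edges). *)
Definition underlying_cycle (n : nat) : Prop :=
  #|V| = n /\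
  exists (f : 'I_n -> V) (g : 'I_n -> E), bijective f /\ bijective g /\
    forall i, ((src (g i) == f i) && (tgt (g i) == f (ordS i))) ||
              ((src (g i) == f (ordS i)) && (tgt (g i) == f i)).

Definition admissible_At (n : nat) : Prop :=
  underlying_cycle n /\ no_oriented_cycle /\ exists x, is_source x.

Variable K : fieldType.

(* Elements of kQ: finitely supported K-valued functions on valid paths
   (coordinates in the basis of paths). *)
Definition elt (f : qpath -> K) : Prop :=
  (forall p, ~~ valid p -> f p = 0) /\
  exists l : seq qpath, forall p, p \notin l -> f p = 0.

Definition delta (p : qpath) : qpath -> K := fun q => if q == p then 1 else 0.

(* Multiplication: on basis elements, delta a * delta b = delta (b then a)
   when the end of b is the start of a, and 0 otherwise
   (composition convention: alpha beta = "first beta, then alpha"). *)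
Definition kQmul (f g : qpath -> K) : qpath -> K := fun p =>
  \sum_(i < (size p.2).+1)
     f (pend (p.1, take i p.2), drop i p.2) * g (p.1, take i p.2).

Definition ideal (I : (qpath -> K) -> Prop) : Prop :=
  [/\ forall f, I f -> elt f,
      I (fun _ => 0),
      forall f g, I f -> I g -> I (fun p => f p + g p),
      forall c f, I f -> I (fun p => c * f p) &
      forall a f, elt a -> I f -> I (kQmul a f) /\ I (kQmul f a)].

Definition nonzero_ideal (I : (qpath -> K) -> Prop) : Prop :=
  exists f, I f /\ exists p, f p != 0.

Definition decomposes (I : (qpath -> K) -> Prop) : Prop :=
  exists I1 I2 : (qpath -> K) -> Prop,
    [/\ ideal I1 /\ ideal I2, nonzero_ideal I1, nonzero_ideal I2,
        (forall f, I1 f -> I2 f -> forall p, f p = 0) &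
        forall f, I f <-> exists f1 f2, [/\ I1 f1, I2 f2 &
                                         forall p, f p = f1 p + f2 p]].

Definition indecomposable (I : (qpath -> K) -> Prop) : Prop :=
  ideal I /\ nonzero_ideal I /\ ~ decomposes I.

Definition lin_semigroup_ideal (I : (qpath -> K) -> Prop) : Prop :=
  exists X : qpath -> bool,
    [/\ forall p, X p -> valid p,
        forall w q, X w -> valid q -> subpath w q -> X q &
        forall f, I f <-> elt f /\ forall p, f p != 0 -> X p].

Definition prod_ideal (I J : (qpath -> K) -> Prop) : (qpath -> K) -> Prop :=
  fun f => exists l : seq ((qpath -> K) * (qpath -> K)),
    foldr (fun u P => [/\ I u.1, J u.2 & P]) True l /\
    forall p, f p = \sum_(u <- l) kQmul u.1 u.2 p.

(* The graph Gamma: vertices = maximal paths, edges = sources and sinks;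
   edge x joins the two maximal paths having x as an endpoint. *)
Definition endpoint (x : V) (p : qpath) : Prop := p.1 = x \/ pend p = x.

Definition joins (x : V) (w1 w2 : qpath) : Prop :=
  [/\ w1 <> w2, endpoint x w1 & endpoint x w2].

Definition GI_vertex (I : (qpath -> K) -> Prop) (p : qpath) : Prop :=
  maximal_path p /\ I (delta p).
Definition GI_edge (I : (qpath -> K) -> Prop) (x : V) : Prop :=
  source_or_sink x /\ I (delta (triv x)).

Definition is_chain_ge2 (Vs : qpath -> Prop) (Es : V -> Prop) : Prop :=
  exists (w : seq qpath) (xs : seq V),
    [/\ (2 <= size w)%N /\ size xs = (size w).-1, uniq w /\ uniq xs,
        (forall p, Vs p <-> p \in w),
        (forall x, Es x <-> x \in xs) &
        forall i (d : qpath) (dx : V), (i < size xs)%N ->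
          joins (nth dx xs i) (nth d w i) (nth d w i.+1)].

Definition GI_is_Gamma (I : (qpath -> K) -> Prop) : Prop :=
  (forall p, GI_vertex I p <-> maximal_path p) /\
  (forall x, GI_edge I x <-> source_or_sink x).

Definition typeII (I : (qpath -> K) -> Prop) : Prop :=
  is_chain_ge2 (GI_vertex I) (GI_edge I) /\ ~ GI_is_Gamma I.

End Quiver.

(* Main.v *)
Require Import Defs.
From mathcomp Require Import all_boot all_algebra.
From Stdlib Require Import Classical ClassicalEpsilon.
From mathcomp Require Import zify.
Set Implicit Arguments. Unset Strict Implicit. Unset Printing Implicit Defensive.
Import GRing.Theory.

Section Geo.
Variable Q : quiver.
Local Notation V := (qV Q).
Local Notation E := (qE Q).
Local Notation src := (@qsrc Q).
Local Notation tgt := (@qtgt Q).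
Local Notation P := (qpath Q).
Hypothesis noc : no_oriented_cycle Q.

Lemma valid_nil (v : V) : @valid Q (v, [::]).
Proof. by []. Qed.

Lemma valid_cons (v : V) e s :
  @valid Q (v, e :: s) = (src e == v) && @valid Q (tgt e, s).
Proof.
rewrite /valid /=; congr (_ && _); case: s => //= e' s.
by rewrite eq_sym.
Qed.

Lemma pend_nil (v : V) : @pend Q (v, [::]) = v.
Proof. by []. Qed.

Lemma pend_cons (v : V) e s : @pend Q (v, e :: s) = @pend Q (tgt e, s).
Proof. by []. Qed.

Lemma pend_cat (v : V) a b : @pend Q (v, a ++ b) = @pend Q (@pend Q (v, a), b).
Proof. by rewrite /pend /= map_cat last_cat. Qed.

Lemma pend_rcons (v : V) a e : @pend Q (v, rcons a e) = tgt e.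
Proof. by rewrite /pend /= map_rcons last_rcons. Qed.

Lemma valid_cat (v : V) a b :
  @valid Q (v, a ++ b) = @valid Q (v, a) && @valid Q (@pend Q (v, a), b).
Proof.
elim: a v => [|e a IH] v /=; first by rewrite pend_nil.
by rewrite !valid_cons IH pend_cons andbA.
Qed.

Lemma subpathP (p q : P) :
  subpath p q <-> exists a b, q.2 = a ++ p.2 ++ b /\ p.1 = @pend Q (q.1, a).
Proof.
split.
- case=> i [j [/andP [hij hj] ->]] /=.
  exists (take i q.2), (drop j q.2); split => //.
  rewrite -{1}(cat_take_drop i q.2); congr (_ ++ _).
  rewrite -{1}(cat_take_drop (j - i) (drop i q.2)) drop_drop subnK //.
- case=> a [b [hq hp]]; exists (size a), (size a + size p.2).
  rewrite leq_addr hq !size_cat leq_add2l leq_addr /=; split => //.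
  rewrite drop_size_cat // addKn take_size_cat //.
  rewrite -hp; case: (p) => ? ? /=; by rewrite take_size_cat.
Qed.

Lemma subpath_refl (p : P) : subpath p p.
Proof. apply/subpathP; exists [::], [::]; rewrite cats0; split => //; by case: p. Qed.

Lemma subpath_trans (p q r : P) : subpath p q -> subpath q r -> subpath p r.
Proof.
move=> /subpathP [a [b [hq hp]]] /subpathP [a' [b' [hr hq']]].
apply/subpathP; exists (a' ++ a), (b ++ b'); split.
- by rewrite hr hq !catA.
- by rewrite hp hq' pend_cat.
Qed.

Lemma valid_sub (p q : P) : @valid Q q -> subpath p q -> @valid Q p.
Proof.
move=> vq /subpathP [a [b [hq hp]]].
move: vq; case: q hq hp => v s /= -> hp.
rewrite valid_cat => /andP [_]; rewrite valid_cat => /andP [].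
by case: p hp => /= v' s' ->.
Qed.



Lemma valid_uniq (v : V) s : @valid Q (v, s) -> uniq s.
Proof.
elim: s v => [|e s IH] v //=.
rewrite valid_cons => /andP [/eqP hv vs].
rewrite (IH _ vs) andbT; apply/negP => es.
case/splitPr: es vs => a c.
rewrite valid_cat => /andP [va]; rewrite valid_cons => /andP [/eqP he _].
have := noc (p := (v, e :: a)); rewrite /= valid_cons hv eqxx va /= => /(_ isT isT).
by rewrite pend_cons -he hv eqxx.
Qed.

Lemma valid_size (p : P) : @valid Q p -> size p.2 <= #|E|.
Proof.
case: p => v s /= /valid_uniq us.
by rewrite -(card_uniqP us) max_card.
Qed.

Lemma maximal_ext (p : P) : @valid Q p -> exists M, maximal_path M /\ subpath p M.
Proof.
move=> vp.
suff H : forall m (p : P), @valid Q p -> #|E| - size p.2 <= m ->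
   exists M, maximal_path M /\ subpath p M by exact: (H _ p vp (leqnn _)).
elim=> [|m IH] {vp}p vp hm.
- exists p; split; last exact: subpath_refl.
  split => // q vq /[dup] spq /subpathP [a [b [hq hp]]].
  have : size q.2 <= size p.2.
    by apply: leq_trans (valid_size vq) _; rewrite -subn_eq0 -leqn0.
  rewrite hq !size_cat => hs.
  have : size a + size b == 0.
    by apply/eqP; lia.
  rewrite addn_eq0 !size_eq0 => /andP [/eqP a0 /eqP b0].
  move: hq hp; rewrite a0 b0 cats0 /= pend_nil.
  by case: (p) => ? ?; case: (q) => ? ? /= -> ->.
- case: (classic (maximal_path p)) => hmax.
    by exists p; split => //; exact: subpath_refl.
  have : exists q, @valid Q q /\ subpath p q /\ q <> p.
    apply: NNPP => hn; apply: hmax; split => // q vq sq.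
    by apply: NNPP => hqp; apply: hn; exists q.
  case=> q [vq [spq hqp]].
  have hlt : size p.2 < size q.2.
    move: (spq) => /subpathP [a [b [hq hp]]].
    rewrite ltnNge; apply/negP => hs.
    have : size a + size b == 0.
      by move: hs; rewrite hq !size_cat => hs; apply/eqP; lia.
    rewrite addn_eq0 !size_eq0 => /andP [/eqP a0 /eqP b0].
    apply: hqp; move: hq hp; rewrite a0 b0 cats0 /= pend_nil.
    by case: (p) => ? ?; case: (q) => ? ? /= -> ->.
  have hm' : #|E| - size q.2 <= m by lia.
  have [M [hM sqM]] := IH q vq hm'.
  exists M; split => //; exact: subpath_trans spq sqM.
Qed.
Definition inc (u : V) (e : E) := (src e == u) || (tgt e == u).

Variable n : nat.
Hypothesis hc : underlying_cycle Q n.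

Lemma three_inc u e1 e2 e3 : inc u e1 -> inc u e2 -> inc u e3 ->
  e1 = e2 \/ e1 = e3 \/ e2 = e3.
Proof.
case: hc => _ [f [g [[f' ff' f'f] [[g' gg' g'g] Hg]]]].
have key : forall e, inc u e -> (g' e == f' u) || (ordS (g' e) == f' u).
  move=> e; rewrite /inc; have := Hg (g' e); rewrite g'g.
  by case/orP => /andP [/eqP -> /eqP ->] /orP [] /eqP <-; rewrite !ff' eqxx ?orbT.
have eq1 : forall e e', g' e = g' e' -> e = e'.
  by move=> e e' h; rewrite -(g'g e) -(g'g e') h.
move=> /key h1 /key h2 /key h3.
have o : forall i j : 'I_n, ordS i = ordS j -> i = j by move=> i j; apply: ordS_inj.
move: h1 h2 h3 => /orP[]/eqP h1 /orP[]/eqP h2 /orP[]/eqP h3;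
  first [left; apply: eq1; apply: o; congruence
        | left; apply: eq1; congruence
        | right; left; apply: eq1; apply: o; congruence
        | right; left; apply: eq1; congruence
        | right; right; apply: eq1; apply: o; congruence
        | right; right; apply: eq1; congruence ].
Qed.

Lemma has_inc u : exists e, inc u e.
Proof.
case: hc => _ [f [g [[f' ff' f'f] [[g' gg' g'g] Hg]]]].
exists (g (f' u)); rewrite /inc; have := Hg (f' u); rewrite f'f.
by case/orP => /andP [/eqP h1 /eqP h2]; [apply/orP; left | apply/orP; right]; apply/eqP.
Qed.

Lemma no_loop e : src e = tgt e -> False.
Proof.
move=> h; have := noc (p := (src e, [:: e])).
by rewrite /= valid_cons eqxx /= pend_cons pend_nil h eqxx => /(_ isT isT).
Qed.

Lemma max_valid (M : P) : maximal_path M -> @valid Q M.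
Proof. by case. Qed.

Lemma sub_nil_l (v : V) s : subpath (v, [::]) (v, s).
Proof. by apply/subpathP; exists [::], s. Qed.

Lemma max_nontriv (M : P) : maximal_path M -> M.2 <> [::].
Proof.
case: M => v s [vM hM] /= s0; subst s.
have [e] := has_inc v; rewrite /inc => /orP [] /eqP he.
- have := hM (v, [:: e]); rewrite valid_cons he eqxx => /(_ isT).
  by move/(_ (sub_nil_l _ _)).
- have := hM (src e, [:: e]); rewrite valid_cons eqxx => /(_ isT).
  have hs : subpath (v, [::]) (src e, [:: e]).
    by apply/subpathP; exists [:: e], [::]; rewrite /= pend_cons pend_nil he.
  by move/(_ hs).
Qed.

Lemma max_source (M : P) : maximal_path M -> is_source M.1.
Proof.
case: M => v s [vM hM] /= e; apply/negP => /eqP he.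
have := hM (src e, e :: s); rewrite valid_cons eqxx he vM => /(_ isT).
have hs : subpath (v, s) (src e, e :: s).
  by apply/subpathP; exists [:: e], [::]; rewrite cats0 /= pend_cons pend_nil he.
move/(_ hs); case => _ h; have := congr1 size h; rewrite /=; lia.
Qed.

Lemma max_sink (M : P) : maximal_path M -> is_sink (pend M).
Proof.
case: M => v s [vM hM] /= e; apply/negP => /eqP he.
have := hM (v, s ++ [:: e]); rewrite valid_cat vM valid_cons he eqxx => /(_ isT).
have hs : subpath (v, s) (v, s ++ [:: e]) by apply/subpathP; exists [::], [:: e].
move/(_ hs); case => h; have := congr1 size h; rewrite size_cat /=; lia.
Qed.

Lemma max_ss (M : P) x : maximal_path M -> endpoint x M -> source_or_sink x.
Proof.
move=> hM [] <-; [left; exact: max_source | right; exact: max_sink].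
Qed.

Lemma fwd (b1 b2 : seq E) (u : V) (c : E) : tgt c = u ->
  @valid Q (u, b1) -> @valid Q (u, b2) ->
  is_sink (@pend Q (u, b1)) -> is_sink (@pend Q (u, b2)) -> b1 = b2.
Proof.
elim: b1 b2 u c => [|e1 b1 IH] [|e2 b2] u c hcu //=.
- by move=> _; rewrite valid_cons => /andP [/eqP h _] hs _; have := hs e2; rewrite h eqxx.
- by rewrite valid_cons => /andP [/eqP h _] _ _ hs; have := hs e1; rewrite h eqxx.
rewrite !valid_cons !pend_cons => /andP [/eqP h1 v1] /andP [/eqP h2 v2] s1 s2.
have : e1 = e2.
  have := @three_inc u c e1 e2; rewrite /inc h1 h2 hcu !eqxx ?orbT => /(_ isT isT isT).
  case=> [hce|[hce|//]]; exfalso; apply: (@no_loop c); congruence.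
move=> e12; subst e2; congr (_ :: _); exact: (IH b2 (tgt e1) e1).
Qed.

Lemma bwd (a1 a2 : seq E) (v1 v2 u : V) (c : E) : src c = u ->
  @valid Q (v1, a1) -> @valid Q (v2, a2) ->
  @pend Q (v1, a1) = u -> @pend Q (v2, a2) = u ->
  is_source v1 -> is_source v2 -> v1 = v2 /\ a1 = a2.
Proof.
elim/last_ind: a1 a2 u c => [|a1 e1 IH] a2 u c hcu; case/lastP: a2 => [|a2 e2] //=.
- by rewrite !pend_nil => _ _ -> ->.
- rewrite pend_nil pend_rcons => _ _ h1 h2 s1 _; have := s1 e2; by rewrite h1 h2 eqxx.
- rewrite pend_nil pend_rcons => _ _ h1 h2 _ s2; have := s2 e1; by rewrite h1 h2 eqxx.
rewrite -!cats1 !valid_cat !pend_cat !pend_cons !pend_nil.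
move=> /andP [va1 /=]; rewrite valid_cons => /andP [/eqP h1 _].
move=> /andP [va2 /=]; rewrite valid_cons => /andP [/eqP h2 _] t1 t2 s1 s2.
have : e1 = e2.
  have := @three_inc u c e1 e2; rewrite /inc t1 t2 hcu !eqxx ?orbT => /(_ isT isT isT).
  case=> [hce|[hce|//]]; exfalso; apply: (@no_loop c); congruence.
move=> e12; subst e2.
have [-> ->] := IH a2 (src e1) e1 erefl va1 va2 (esym h1) (esym h2) s1 s2.
by [].
Qed.

Lemma shared (M1 M2 : P) e : maximal_path M1 -> maximal_path M2 ->
  e \in M1.2 -> e \in M2.2 -> M1 = M2.
Proof.
move=> m1 m2; have so1 := max_source m1; have so2 := max_source m2.
have si1 := max_sink m1; have si2 := max_sink m2.
move: (max_valid m1) (max_valid m2) so1 so2 si1 si2.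
case: M1 {m1} => v1 s1; case: M2 {m2} => v2 s2 /= vM1 vM2 so1 so2 si1 si2 i1 i2.
case/splitPr: i1 vM1 si1 => a1 b1; case/splitPr: i2 vM2 si2 => a2 b2.
rewrite !valid_cat !valid_cons !pend_cat !pend_cons.
move=> /andP [va2 /andP [/eqP h2 vb2]] si2 /andP [va1 /andP [/eqP h1 vb1]] si1.
have [-> ->] := bwd (esym erefl) va1 va2 (esym h1) (esym h2) so1 so2.
by rewrite (fwd (erefl (tgt e)) vb1 vb2 si1 si2).
Qed.

Lemma on_inc (M : P) x : @valid Q M -> M.2 <> [::] -> subpath (x, [::]) M ->
  exists e, e \in M.2 /\ inc x e.
Proof.
case: M => v s /= vM ne /subpathP [a [b [/= h hx]]].
rewrite /= in hx; subst s; case/lastP: a vM ne hx => [|a e] /=.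
- case: b => [|e b] // vM _; rewrite pend_nil => ->.
  move: vM; rewrite valid_cons => /andP [/eqP he _].
  by exists e; rewrite inE eqxx /inc he eqxx.
- rewrite pend_rcons => _ _ ->; exists e.
  by rewrite mem_cat mem_rcons inE eqxx /inc eqxx orbT.
Qed.

Lemma on_endpoint (M1 M2 : P) x : maximal_path M1 -> maximal_path M2 -> M1 <> M2 ->
  subpath (x, [::]) M1 -> subpath (x, [::]) M2 -> endpoint x M1.
Proof.
move=> m1 m2 ne s1 s2.
have [e2 [e2in e2inc]] := on_inc (max_valid m2) (max_nontriv m2) s2.
move: s1 (max_valid m1) (fun e => @shared M1 M2 e m1 m2) ne.
case: M1 {m1} => v s /subpathP [a [b [/= h hx]]]; rewrite /= in hx; subst s.
case/lastP: a hx => [|a ea] hx.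
  by rewrite pend_nil in hx; left.
case: b => [|eb b].
  by rewrite cats0 => *; right.
rewrite pend_rcons in hx; rewrite valid_cat pend_rcons => /andP [_].
rewrite valid_cons => /andP [/eqP hb _] sh ne.
have := @three_inc x ea eb e2; rewrite e2inc /inc hx hb !eqxx ?orbT => /(_ isT isT isT).
case=> [hab|[ha2|hb2]].
- by exfalso; apply: (@no_loop eb); congruence.
- exfalso; apply: (ne); apply: (sh ea); [by rewrite mem_cat mem_rcons inE eqxx | by rewrite ha2].
- exfalso; apply: (ne); apply: (sh eb); [by rewrite mem_cat inE eqxx orbT | by rewrite hb2].
Qed.

Lemma two_max (M1 M2 p : P) : maximal_path M1 -> maximal_path M2 -> M1 <> M2 ->
  subpath p M1 -> subpath p M2 ->
  exists x, p = (x, [::]) /\ endpoint x M1 /\ endpoint x M2.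
Proof.
move=> m1 m2 ne s1 s2; case: p s1 s2 => x [|e s] s1 s2.
  exists x; split => //; split; first exact: on_endpoint m1 m2 ne s1 s2.
  by apply: on_endpoint m2 m1 _ s2 s1 => h; apply: ne.
exfalso; apply: ne; apply: (shared (e := e) m1 m2).
- by move: s1 => /subpathP [a [b [-> _]]]; rewrite /= mem_cat inE eqxx orbT.
- by move: s2 => /subpathP [a [b [-> _]]]; rewrite /= mem_cat inE eqxx orbT.
Qed.

Lemma end_inc (M : P) x : maximal_path M -> endpoint x M -> exists e, e \in M.2 /\ inc x e.
Proof.
move=> m; have := max_nontriv m; have := max_valid m.
case: M {m} => v s /= vM ne [] /= hx.
- case: s vM ne => [|e s] // vM _; move: vM; rewrite valid_cons => /andP [/eqP he _].
  by exists e; rewrite inE eqxx /inc he hx eqxx.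
- case/lastP: s vM ne hx => [|s e] // _ _; rewrite pend_rcons => hx.
  by exists e; rewrite mem_rcons inE eqxx /inc hx eqxx orbT.
Qed.

Lemma am2 (M1 M2 M3 : P) x : maximal_path M1 -> maximal_path M2 -> maximal_path M3 ->
  endpoint x M1 -> endpoint x M2 -> endpoint x M3 ->
  M1 = M2 \/ M1 = M3 \/ M2 = M3.
Proof.
move=> m1 m2 m3 /(end_inc m1) [e1 [i1 c1]] /(end_inc m2) [e2 [i2 c2]] /(end_inc m3) [e3 [i3 c3]].
case: (three_inc c1 c2 c3) => [h|[h|h]]; subst.
- by left; exact: shared m1 m2 i1 i2.
- by right; left; exact: shared m1 m3 i1 i3.
- by right; right; exact: shared m2 m3 i2 i3.
Qed.
End Geo.

Section Alg.
Variable Q : quiver.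
Variable K : fieldType.
Local Notation V := (qV Q).
Local Notation E := (qE Q).
Local Notation P := (qpath Q).
Local Notation F := (P -> K).
Local Open Scope ring_scope.

Definition spanP (Z : P -> Prop) (f : F) : Prop :=
  elt f /\ forall p, f p != 0 -> Z p.

Definition upclosed (Z : P -> Prop) : Prop :=
  (forall p, Z p -> @valid Q p) /\
  (forall w q, Z w -> @valid Q q -> subpath w q -> Z q).

Lemma elt0 : elt (fun _ : P => 0 : K).
Proof. by split => // ; exists [::]. Qed.

Lemma eltD (f g : F) : elt f -> elt g -> elt (fun p => f p + g p).
Proof.
move=> [f0 [lf hf]] [g0 [lg hg]]; split.
  by move=> p vp; rewrite f0 ?g0 ?addr0.
exists (lf ++ lg) => p; rewrite mem_cat negb_or => /andP [h1 h2].
by rewrite hf ?hg ?addr0.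
Qed.

Lemma eltZ (c : K) (f : F) : elt f -> elt (fun p => c * f p).
Proof.
move=> [f0 [lf hf]]; split; first by move=> p vp; rewrite f0 ?mulr0.
by exists lf => p hp; rewrite hf ?mulr0.
Qed.

Lemma elt_ext (f g : F) : elt f -> (forall p, g p = f p) -> elt g.
Proof.
move=> [f0 [lf hf]] e; split; first by move=> p vp; rewrite e f0.
by exists lf => p hp; rewrite e hf.
Qed.

Lemma kQmul_nz (a b : F) (p : P) : kQmul a b p != 0 ->
  exists i : 'I_(size p.2).+1,
    a (@pend Q (p.1, take i p.2), drop i p.2) != 0 /\ b (p.1, take i p.2) != 0.
Proof.
move=> h; apply: NNPP => hn; move/eqP: h; apply; rewrite /kQmul big1 // => i _.
case: (eqVneq (a (@pend Q (p.1, take i p.2), drop i p.2)) 0) => [->|ha]; first by rewrite mul0r.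
case: (eqVneq (b (p.1, take i p.2)) 0) => [->|hb]; first by rewrite mulr0.
by exfalso; apply: hn; exists i.
Qed.

Lemma valid_split (p : P) (i : nat) : @valid Q (p.1, take i p.2) ->
  @valid Q (@pend Q (p.1, take i p.2), drop i p.2) -> @valid Q p.
Proof.
case: p => v s /= h1 h2.
by have := valid_cat v (take i s) (drop i s); rewrite cat_take_drop h1 h2.
Qed.

Lemma sub_pre (p : P) i : subpath (p.1, take i p.2) p.
Proof. by apply/subpathP; exists [::], (drop i p.2); rewrite /= cat_take_drop. Qed.

Lemma sub_suf (p : P) i : subpath (@pend Q (p.1, take i p.2), drop i p.2) p.
Proof. by apply/subpathP; exists (take i p.2), [::]; rewrite cats0 cat_take_drop. Qed.

Lemma nz_valid (f : F) p : elt f -> f p != 0 -> @valid Q p.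
Proof. by move=> [f0 _] h; apply: contraNT h => /f0 ->. Qed.

Lemma eltM (a b : F) : elt a -> elt b -> elt (kQmul a b).
Proof.
move=> ea eb; split.
  move=> p vp; apply/eqP; apply: contraNT vp => /kQmul_nz [i [h1 h2]].
  exact: valid_split (nz_valid eb h2) (nz_valid ea h1).
case: ea => _ [la ha]; case: eb => _ [lb hb].
exists [seq (y.1, y.2 ++ x.2) | x <- la, y <- lb] => p hp.
apply/eqP; apply: contraNT hp => /kQmul_nz [i [h1 h2]].
have m1 : (@pend Q (p.1, take i p.2), drop i p.2) \in la.
  by apply: contraNT h1 => /ha ->.
have m2 : (p.1, take i p.2) \in lb by apply: contraNT h2 => /hb ->.
have := allpairs_f (fun x y : P => (y.1, y.2 ++ x.2)) m1 m2.
by rewrite /= cat_take_drop; case: (p).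
Qed.

Lemma span_ideal Z : upclosed Z -> ideal (spanP Z).
Proof.
move=> [Zv Zu]; split.
- by move=> f [].
- by split; [exact: elt0 | move=> p; rewrite eqxx].
- move=> f g [ef sf] [eg sg]; split; first exact: eltD.
  move=> p h; case: (eqVneq (f p) 0) => [h0|]; last exact: sf.
  by apply: sg; move: h; rewrite h0 add0r.
- move=> c f [ef sf]; split; first exact: eltZ.
  by move=> p h; apply: sf; apply: contraNneq h => ->; rewrite mulr0.
- move=> a f ea [ef sf]; split; split; try exact: eltM.
  + move=> p /[dup] hp /kQmul_nz [i [h1 h2]].
    apply: Zu (sf _ h2) (nz_valid (eltM ea ef) hp) (sub_pre _ _).
  + move=> p /[dup] hp /kQmul_nz [i [h1 h2]].
    apply: Zu (sf _ h1) (nz_valid (eltM ef ea) hp) (sub_suf _ _).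
Qed.

Lemma delta_elt (p : P) : @valid Q p -> elt (delta K p).
Proof.
move=> vp; split.
  by move=> q; rewrite /delta; case: eqP => // ->; rewrite vp.
by exists [:: p] => q; rewrite inE /delta => /negbTE ->.
Qed.

Lemma delta_nz (p q : P) : delta K p q != 0 -> q = p.
Proof. by rewrite /delta; case: (q =P p) => // _; rewrite eqxx. Qed.

Lemma span_nonzero Z p : upclosed Z -> Z p -> nonzero_ideal (spanP Z).
Proof.
move=> [Zv _] zp; exists (delta K p); split; last by exists p; rewrite /delta eqxx oner_neq0.
by split; [exact: delta_elt (Zv _ zp) | move=> q /delta_nz ->].
Qed.

Definition restr (Z : P -> Prop) (f : F) : F :=
  fun p => if excluded_middle_informative (Z p) then f p else 0.

Lemma elt_restr Z (f : F) : elt f -> elt (restr Z f).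
Proof.
move=> [f0 [l hl]]; split.
  by move=> p vp; rewrite /restr; case: excluded_middle_informative => // ?; rewrite f0.
by exists l => p hp; rewrite /restr; case: excluded_middle_informative => // ?; rewrite hl.
Qed.

Lemma decomp_span (Z Z1 Z2 : P -> Prop) :
  upclosed Z1 -> upclosed Z2 ->
  (forall p, Z1 p -> Z2 p -> False) ->
  (forall p, Z p <-> Z1 p \/ Z2 p) ->
  (exists p, Z1 p) -> (exists p, Z2 p) ->
  decomposes (spanP Z).
Proof.
move=> u1 u2 dis eZ [p1 z1] [p2 z2].
exists (spanP Z1), (spanP Z2); split.
- by split; apply: span_ideal.
- exact: span_nonzero u1 z1.
- exact: span_nonzero u2 z2.
- move=> f [_ s1] [_ s2] p; apply/eqP; apply: NNPP => /negP h.
  exact: dis (s1 _ h) (s2 _ h).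
- move=> f; split.
  + move=> [ef sf]; exists (restr Z1 f), (restr (fun p => ~ Z1 p) f); split.
    * split.
        exact: elt_restr.
      move=> p; rewrite /restr; case: excluded_middle_informative => h //.
      by rewrite eqxx.
    * split.
        exact: elt_restr.
      move=> p; rewrite /restr; case: excluded_middle_informative => h; last by rewrite eqxx.
      by move=> /sf /eZ [].
    * move=> p; rewrite /restr.
      case: excluded_middle_informative => h1; case: excluded_middle_informative => h2 //.
      - by rewrite addr0.
      - by rewrite add0r.
  + case=> f1 [f2 [[e1 s1] [e2 s2] hf]]; split.
      by apply: elt_ext (eltD e1 e2) hf.
    move=> p; rewrite hf => h; apply/eZ.
    case: (eqVneq (f1 p) 0) => [h0|/s1]; last by left.
    by right; apply: s2; move: h; rewrite h0 add0r.
Qed.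

Lemma decomposes_ext (A B : F -> Prop) :
  (forall f, A f <-> B f) -> decomposes B -> decomposes A.
Proof.
move=> e [I1 [I2 [hi n1 n2 d h]]]; exists I1, I2; split => // f.
by rewrite -h.
Qed.

End Alg.

Lemma drop_le_cat (T : Type) i (s1 s2 : seq T) : i <= size s1 ->
  drop i (s1 ++ s2) = drop i s1 ++ s2.
Proof.
rewrite drop_cat leq_eqVlt => /orP [/eqP ->|->] //.
by rewrite ltnn subnn drop0 drop_size.
Qed.

Lemma sum_uniq (K : fieldType) (T : eqType) (L : seq T) (G : T -> K) q : uniq L ->
  (\sum_(p <- L) (if q == p then G p else 0) = if q \in L then G q else 0)%R.
Proof.
elim: L => [|x L IH] /=; first by rewrite big_nil.
move=> /andP [xL uL]; rewrite big_cons IH // inE.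
case: (eqVneq q x) => [->|] /=; last by rewrite add0r.
by rewrite (negbTE xL) addr0.
Qed.

Section Prod.
Variable Q : quiver.
Variable K : fieldType.
Local Notation V := (qV Q).
Local Notation E := (qE Q).
Local Notation P := (qpath Q).
Local Notation F := (P -> K).
Local Open Scope ring_scope.

Variables (I J : F -> Prop) (X Y : P -> bool).
Hypothesis hX : forall p, X p -> @valid Q p.
Hypothesis uX : forall w q, X w -> @valid Q q -> subpath w q -> X q.
Hypothesis IX : forall f, I f <-> elt f /\ forall p, f p != 0 -> X p.
Hypothesis hY : forall p, Y p -> @valid Q p.
Hypothesis uY : forall w q, Y w -> @valid Q q -> subpath w q -> Y q.
Hypothesis JY : forall f, J f <-> elt f /\ forall p, f p != 0 -> Y p.

Definition ZZ (p : P) : Prop := @valid Q p /\ exists i, (i <= size p.2)%N /\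
  Y (p.1, take i p.2) /\ X (@pend Q (p.1, take i p.2), drop i p.2).

Lemma ZZ_up : upclosed ZZ.
Proof.
split; first by move=> p [].
move=> w q [vw [i [hi [hy hx]]]] vq /[dup] swq /subpathP [a [b [hq hw]]].
split => //; exists (size a + i); split.
  by rewrite hq !size_cat; lia.
have ht : take (size a + i) q.2 = a ++ take i w.2.
  by rewrite hq takeD take_size_cat // drop_size_cat // takel_cat.
have hd : drop (size a + i) q.2 = drop i w.2 ++ b.
  by rewrite hq addnC -drop_drop drop_size_cat // drop_le_cat.
split.
- apply: uY hy (valid_sub vq (sub_pre _ _)) _.
  by apply/subpathP; exists a, [::]; rewrite ht cats0 /= hw.
- apply: uX hx (valid_sub vq (sub_suf _ _)) _.
  apply/subpathP; exists [::], b; rewrite hd /= pend_nil; split => //.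
  by rewrite ht pend_cat -hw.
Qed.

Lemma spanP_ext Z (f g : F) : spanP Z g -> (forall p, f p = g p) -> spanP Z f.
Proof.
move=> [eg sg] e; split; first exact: elt_ext eg _.
by move=> p; rewrite e; apply: sg.
Qed.

Lemma mul_nz_r (a b : K) : a * b != 0 -> b != 0.
Proof. by apply: contraNneq => ->; rewrite mulr0. Qed.

Lemma kQmul_delta (c : K) (b s q : P) : s.1 = @pend Q b ->
  kQmul (fun r => c * delta K s r) (delta K b) q =
  if q == (b.1, b.2 ++ s.2) then c else 0.
Proof.
case: s => s1 s2 /= hs; rewrite /kQmul; case: eqP => [->|ne].
- have hlt : (size b.2 < (size (b.1, b.2 ++ s2).2).+1)%N by rewrite /= size_cat ltnS leq_addr.
  rewrite (bigD1 (Ordinal hlt)) //= big1 ?addr0.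
    rewrite take_size_cat // drop_size_cat // -surjective_pairing -hs.
    by rewrite /delta !eqxx !mulr1.
  move=> i /eqP hi; rewrite /delta.
  case: eqP => _; last by rewrite mulr0 mul0r.
  case: eqP; last by rewrite mulr0.
  move/(congr1 snd) => /= ht; exfalso; apply: hi; apply: val_inj => /=.
  have := congr1 size ht; rewrite size_take.
  have := ltn_ord i; move: (nat_of_ord i) => k; rewrite size_cat ltnS.
  case: ltnP => h0 h1 h2; rewrite ?size_cat in h0 h2 *; first exact: h2.
  by apply/eqP; rewrite eqn_leq; apply/andP; split; lia.
- rewrite big1 // => i _; rewrite /delta.
  case: eqP => h1; last by rewrite mulr0 mul0r.
  case: eqP => h2; last by rewrite mulr0.
  exfalso; apply: ne; rewrite -h2 /=; have := congr1 snd h1 => /= <-.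
  by rewrite cat_take_drop; case: (q).
Qed.

Definition Pk (p : P) (i : nat) : bool :=
  Y (p.1, take i p.2) && X (@pend Q (p.1, take i p.2), drop i p.2).
Definition kk (p : P) : nat :=
  nth 0%N (iota 0 (size p.2).+1) (find (Pk p) (iota 0 (size p.2).+1)).
Definition pre (p : P) : P := (p.1, take (kk p) p.2).
Definition suf (p : P) : P := (@pend Q (pre p), drop (kk p) p.2).

Lemma kk_spec p : ZZ p -> Y (pre p) && X (suf p).
Proof.
case=> _ [i [hi [hy hx]]].
have : has (Pk p) (iota 0 (size p.2).+1).
  by apply/hasP; exists i; [rewrite mem_iota; lia | rewrite /Pk hy hx].
by move/(nth_find 0%N).
Qed.

Lemma prod_char f : prod_ideal I J f <-> spanP ZZ f.
Proof.
have [_ h0 hadd _ _] := @span_ideal Q K ZZ ZZ_up.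
split.
- case=> l [hl hf]; apply: spanP_ext _ hf.
  elim: l hl => [_|u l IH [hu1 hu2 hl]].
    by apply: spanP_ext h0 _ => p; rewrite big_nil.
  apply: spanP_ext (hadd _ _ _ (IH hl)) _; last by move=> p; rewrite big_cons.
  have [e1 s1] := (fst (IX _)) hu1; have [e2 s2] := (fst (JY _)) hu2.
  split; first exact: eltM.
  move=> p /kQmul_nz [i [h1 h2]]; split.
    exact: valid_split (nz_valid e2 h2) (nz_valid e1 h1).
  by exists i; split; [rewrite -ltnS | split; [apply: s2 | apply: s1]].
- move=> [ef sf]; have [f0 [L hL]] := ef.
  set L' := undup [seq p <- L | f p != 0].
  exists [seq ((fun r => f p * delta K (suf p) r), delta K (pre p)) | p <- L']; split.
    have : forall p, p \in L' -> f p != 0 by move=> p; rewrite mem_undup mem_filter => /andP [].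
    elim: L' => [//|p l IH] hl /=.
    have fp := hl p (mem_head _ _).
    have /andP [yp xp] := kk_spec (sf _ fp).
    split.
    + apply/IX; split; first exact: (eltZ _ (delta_elt K (hX xp))).
      by move=> r /mul_nz_r /delta_nz ->.
    + apply/JY; split; first exact: (delta_elt K (hY yp)).
      by move=> r /delta_nz ->.
    + by apply: IH => r hr; apply: hl; rewrite inE hr orbT.
  move=> q; rewrite big_map.
  rewrite (eq_bigr (fun p => if q == p then f p else 0)); last first.
    move=> p _; rewrite kQmul_delta //.
    have -> : ((pre p).1, (pre p).2 ++ (suf p).2) = p by rewrite /= cat_take_drop; case: (p).
    by [].
  rewrite sum_uniq ?undup_uniq //; case: ifP => // hq.
  apply/eqP; apply: contraFT hq => hfq; rewrite mem_undup mem_filter hfq /=.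
  by apply: contraNT hfq => /hL ->; rewrite eqxx.
Qed.
End Prod.
Section Main.
Variable K : fieldType.
Variable Q : quiver.
Local Notation V := (qV Q).
Local Notation E := (qE Q).
Local Notation P := (qpath Q).
Local Notation F := (P -> K).
Variable n : nat.
Hypothesis hc : underlying_cycle Q n.
Hypothesis noc : no_oriented_cycle Q.
Variables (I J : F -> Prop) (X Y : P -> bool).
Hypothesis hX : forall p, X p -> @valid Q p.
Hypothesis uX : forall w q, X w -> @valid Q q -> subpath w q -> X q.
Hypothesis IX : forall f, I f <-> elt f /\ forall p, (f p != 0)%R -> X p.
Hypothesis hY : forall p, Y p -> @valid Q p.
Hypothesis uY : forall w q, Y w -> @valid Q q -> subpath w q -> Y q.
Hypothesis JY : forall f, J f <-> elt f /\ forall p, (f p != 0)%R -> Y p.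

Lemma dI p : I (delta K p) <-> X p.
Proof.
rewrite IX; split.
  by move=> [_ h]; apply: h; rewrite /delta eqxx oner_neq0.
move=> xp; split; first exact: delta_elt (hX xp).
by move=> q /delta_nz ->.
Qed.

Lemma dJ p : J (delta K p) <-> Y p.
Proof.
rewrite JY; split.
  by move=> [_ h]; apply: h; rewrite /delta eqxx oner_neq0.
move=> xp; split; first exact: delta_elt (hY xp).
by move=> q /delta_nz ->.
Qed.

Lemma GVI p : GI_vertex I p <-> maximal_path p /\ X p.
Proof. by rewrite /GI_vertex dI. Qed.
Lemma GVJ p : GI_vertex J p <-> maximal_path p /\ Y p.
Proof. by rewrite /GI_vertex dJ. Qed.
Lemma GEI x : GI_edge I x <-> source_or_sink x /\ X (x, [::]).
Proof. by rewrite /GI_edge dI. Qed.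
Lemma GEJ x : GI_edge J x <-> source_or_sink x /\ Y (x, [::]).
Proof. by rewrite /GI_edge dJ. Qed.

Lemma sub_end (M : P) x : endpoint x M -> subpath (x, [::]) M.
Proof.
case: M => v s; rewrite /endpoint /= => -[<-|<-]; apply/subpathP.
- by exists [::], s.
- by exists s, [::]; rewrite /= cats0.
Qed.

Variables (w : seq P) (xs : seq V) (d0 : P) (dx : V).
Hypothesis hw2 : (2 <= size w)%N.
Hypothesis hxs : size xs = (size w).-1.
Hypothesis uw : uniq w.
Hypothesis uxs : uniq xs.
Hypothesis hV : forall p, GI_vertex I p <-> p \in w.
Hypothesis hE : forall x, GI_edge I x <-> x \in xs.
Hypothesis hjoin : forall i, (i < size xs)%N -> joins (nth dx xs i) (nth d0 w i) (nth d0 w i.+1).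
Hypothesis H9 : forall x, source_or_sink x <-> GI_edge I x \/ GI_edge J x.
Hypothesis H10 : forall w, GI_vertex I w -> GI_vertex J w ->
     (forall x, GI_edge I x -> GI_edge J x -> ~ endpoint x w) ->
     forall x, GI_edge J x -> endpoint x w -> is_source x.
Hypothesis nGJ : ~ GI_is_Gamma J.

Lemma wmax i : (i < size w)%N -> maximal_path (nth d0 w i) /\ X (nth d0 w i).
Proof. by move=> hi; apply/GVI/hV; rewrite mem_nth. Qed.

Lemma win M : maximal_path M -> X M -> exists i, (i < size w)%N /\ M = nth d0 w i.
Proof.
move=> mM xM; have : M \in w by apply/hV/GVI.
by move=> hM; exists (index M w); rewrite index_mem nth_index.
Qed.

Lemma wi_eq i k : (i < size w)%N -> (k < size w)%N -> nth d0 w i = nth d0 w k -> i = k.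
Proof. by move=> hi hk /eqP; rewrite nth_uniq // => /eqP. Qed.

Lemma xin x : GI_edge I x -> exists m, (m < size xs)%N /\ x = nth dx xs m.
Proof. by move/hE => hx; exists (index x xs); rewrite index_mem nth_index. Qed.

Lemma gap : exists j, (j < size xs)%N /\ ~ GI_edge J (nth dx xs j).
Proof.
apply: NNPP => hng.
have allJ : forall x, GI_edge I x -> GI_edge J x.
  move=> x /xin [m [hm ->]]; apply: NNPP => h; apply: hng; by exists m.
have eJ : forall x, source_or_sink x -> GI_edge J x.
  by move=> x /H9 [/allJ|].
apply: nGJ; split => [p|x]; split.
- by case.
- move=> mp; apply/GVJ; split => //.
  have /eJ /GEJ [_ yv] := max_ss mp (or_introl erefl).
  apply: uY yv (max_valid mp) _; case: (p) => ? ?; exact: sub_nil_l.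
- by case.
- exact: eJ.
Qed.

Lemma Zp_max p : ZZ X Y p -> exists i, (i < size w)%N /\ subpath p (nth d0 w i).
Proof.
move=> /[dup] zp [vp [k [hk [hy hx]]]].
have [M [mM sM]] := maximal_ext noc vp.
have xM : X M.
  apply: uX hx (max_valid mM) _; apply: subpath_trans sM; exact: sub_suf.
have [i [hi eM]] := win mM xM; exists i; split => //; by rewrite -eM.
Qed.

Section Gap.
Variable j : nat.
Hypothesis hj : (j < size xs)%N.
Hypothesis hgap : ~ GI_edge J (nth dx xs j).

Definition Left (p : P) := exists i, (i <= j)%N /\ subpath p (nth d0 w i).
Definition Right (p : P) := exists i, (j < i)%N /\ (i < size w)%N /\ subpath p (nth d0 w i).

Lemma keyLR p : ZZ X Y p -> Left p -> Right p -> False.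
Proof.
move=> zp [i [hi si]] [k [hjk [hk sk]]].
have hiw : (i < size w)%N by lia.
have [mi _] := wmax hiw; have [mk _] := wmax hk.
have ne : nth d0 w i <> nth d0 w k by move/(wi_eq hiw hk); lia.
have [x [ep [exi exk]]] := two_max noc hc mi mk ne si sk.
subst p; case: zp => _ [i0 [_ /= [hy hx]]].
have ss := max_ss mi exi.
have eI : GI_edge I x by apply/GEI.
have eJ : GI_edge J x by apply/GEJ.
have [m [hm ex]] := xin eI.
have [jne e1 e2] := hjoin hm; rewrite -ex in e1 e2.
have hm1 : (m.+1 < size w)%N by lia.
have hm0 : (m < size w)%N by lia.
have [mm _] := wmax hm0; have [mm1 _] := wmax hm1.
have A := am2 noc hc mi mk mm exi exk e1.
have B := am2 noc hc mi mk mm1 exi exk e2.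
have C : i = m \/ k = m.
  by case: A => [//|[/(wi_eq hiw hm0)|/(wi_eq hk hm0)]]; auto.
have D : i = m.+1 \/ k = m.+1.
  by case: B => [//|[/(wi_eq hiw hm1)|/(wi_eq hk hm1)]]; auto.
have hmj : m = j by case: C; case: D; lia.
by apply: hgap; rewrite -hmj -ex.
Qed.

Lemma coverLR p : ZZ X Y p -> Left p \/ Right p.
Proof.
move=> /Zp_max [i [hi si]]; case: (leqP i j) => h.
- by left; exists i.
- by right; exists i.
Qed.

Lemma upL : upclosed (fun p => ZZ X Y p /\ Left p).
Proof.
split; first by move=> p [[]].
move=> p q [zp lp] vq spq.
have zq : ZZ X Y q := (ZZ_up uX uY).2 _ _ zp vq spq.
split => //; case: (coverLR zq) => // [[i [hi [hiw sq]]]].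
exfalso; apply: (keyLR zp lp); exists i; split => //; split => //.
exact: subpath_trans spq sq.
Qed.

Lemma upR : upclosed (fun p => ZZ X Y p /\ Right p).
Proof.
split; first by move=> p [[]].
move=> p q [zp rp] vq spq.
have zq : ZZ X Y q := (ZZ_up uX uY).2 _ _ zp vq spq.
split => //; case: (coverLR zq) => // [[i [hi sq]]].
exfalso; apply: (keyLR zp _ rp); exists i; split => //.
exact: subpath_trans spq sq.
Qed.

Lemma endZ i : (i = 0 \/ i = (size w).-1)%N ->
  exists z, ZZ X Y z /\ subpath z (nth d0 w i).
Proof.
move=> hi; have hiw : (i < size w)%N by lia.
set M := nth d0 w i; have [mM xM] := wmax hiw.
have [y [ey jy]] : exists y, endpoint y M /\ GI_edge J y.
  apply: NNPP => hn.
  have side : forall x, endpoint x M -> exists m, (m < size xs)%N /\ x = nth dx xs m /\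
      (i = m \/ i = m.+1).
    move=> x ex; have : GI_edge I x.
      case/H9: (max_ss mM ex) => // h; exfalso; apply: hn; by exists x.
    case/xin => m [hm em]; exists m; split => //; split => //.
    have [jne e1 e2] := hjoin hm; rewrite -em in e1 e2.
    have hm0 : (m < size w)%N by lia.
    have hm1 : (m.+1 < size w)%N by lia.
    have [mm _] := wmax hm0; have [mm1 _] := wmax hm1.
    case: (am2 noc hc mM mm mm1 ex e1 e2) => [/(wi_eq hiw hm0)|[/(wi_eq hiw hm1)|//]]; auto.
  have [m1 [hm1 [e1 o1]]] := side _ (or_introl erefl).
  have [m2 [hm2 [e2 o2]]] := side _ (or_intror erefl).
  have m12 : m1 = m2 by case: o1; case: o2; case: hi; lia.
  have vM := max_valid mM; have ntM := max_nontriv hc mM.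
  have := noc vM; rewrite lt0n size_eq0 => /(_ (introN eqP ntM)).
  by rewrite e1 e2 m12 eqxx.
case: (classic (exists x, GI_edge I x /\ GI_edge J x /\ endpoint x M)).
  move=> [x [eI [eJ ex]]]; exists (x, [::]); split; last exact: sub_end.
  split => //; exists 0%N; split => //=.
  by split; [case/GEJ: eJ | case/GEI: eI].
move=> hiso.
have yM : Y M by apply: uY (max_valid mM) (sub_end ey); case/GEJ: jy.
have sy : is_source y.
  apply: (H10 _ _ _ jy ey); [exact/GVI | exact/GVJ |].
  by move=> x a b c; apply: hiso; exists x.
have y1 : M.1 = y.
  case: ey => // hp; have ntM := max_nontriv hc mM.
  move: hp; case: (M) ntM => v s /=; case/lastP: s => [//|s e] _.
  by rewrite pend_rcons => he; have := sy e; rewrite he eqxx.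
exists M; split; last exact: subpath_refl.
split; first exact: max_valid.
exists 0%N; split => //; rewrite take0 drop0 pend_nil y1; split.
  by case/GEJ: jy.
by rewrite -y1 -surjective_pairing.
Qed.
End Gap.
Arguments keyLR : clear implicits.
Arguments upL : clear implicits.
Arguments upR : clear implicits.
Arguments endZ : clear implicits.

Lemma main_decomp : decomposes (prod_ideal I J).
Proof.
have [j [hj hgap]] := gap.
apply: decomposes_ext (prod_char hX uX IX hY uY JY) _.
apply: (decomp_span K (upL j hj hgap) (upR j hj hgap)).
- by move=> p [zp lp] [_ rp]; exact: keyLR j hj hgap p zp lp rp.
- move=> p; split; last by case=> -[].
  by move=> zp; case: (@coverLR j p zp) => h; [left | right].
- have [z [zz sz]] := endZ j hj 0 (or_introl erefl).
  by exists z; split => //; exists 0%N.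
- have [z [zz sz]] := endZ j hj (size w).-1 (or_intror erefl).
  exists z; split => //; exists (size w).-1; split; [lia | split; [lia | done]].
Qed.
End Main.
Arguments main_decomp : clear implicits.

Theorem corollary26 (K : closedFieldType) (n : nat) (Q : quiver)
  (I J : (qpath Q -> K) -> Prop) :
  admissible_At Q n ->
  lin_semigroup_ideal I -> indecomposable I -> typeII I ->
  lin_semigroup_ideal J -> indecomposable J -> typeII J ->
  (* Gamma_I \cup Gamma_J = Gamma *)
  (forall p, maximal_path p <-> GI_vertex I p \/ GI_vertex J p) ->
  (forall x, source_or_sink x <-> GI_edge I x \/ GI_edge J x) ->
  (* for every isolated vertex w of Gamma_I \cap Gamma_J, the edge of
     Gamma_J adjacent to w is a source of Q *)
  (forall w, GI_vertex I w -> GI_vertex J w ->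
     (forall x, GI_edge I x -> GI_edge J x -> ~ endpoint x w) ->
     forall x, GI_edge J x -> endpoint x w -> is_source x) ->
  decomposes (prod_ideal I J).
Proof.
move=> [hc [noc [x0 _]]] [X [hX uX IX]] _ [[w [xs [[hw2 hxs] [uw uxs] hV hE hjoin]]] _].
move=> [Y [hY uY JY]] _ [_ nGJ] H8 H9 H10.
exact: (main_decomp K Q n hc noc I J X Y hX uX IX hY uY JY w xs (x0, [::]) x0
  hw2 hxs uw uxs hV hE (fun i => hjoin i (x0, [::]) x0) H9 H10 nGJ).
Qed.
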